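(* Let $m\ge4$ and let $g(x_1,x_2,x_3)=a_1(cx_1+\alpha_1)^2+a_2(cx_2+\alpha_2)^2+a_3(cx_3+\alpha_3)^2$ be a tight regular complete quadratic polynomial where $a_1,a_2,a_3$ are positive integers with $\gcd(a_1,a_2,a_3)=1$ and $a_1\le a_2\le a_3$, the lattice $\langle a_1,a_2,a_3\rangle$ is $p$-stable for every prime $p\nmid c$, $\alpha_i\in\mathbb{Z}$ with $0<\alpha_i<c/2$ for $i=1,2,3$, and $\gcd(c,\alpha_1\alpha_2\alpha_3)=1$. For $n\in\mathbb{Z}_{\ge0}$ let $\beta(n)=\delta cn+a_1\alpha_1^2+a_2\alpha_2^2+a_3\alpha_3^2$. Then: (i) $\min(g)=a_1\alpha_1^2+a_2\alpha_2^2+a_3\alpha_3^2$; (ii) for every prime divisor $p$ of $c$ and every $n\in\mathbb{Z}_{\ge0}$, $\beta(n)$ is represented by $g$ over $\mathbb{Z}_p$; (iii) for every prime $p$ not dividing $c$ and every $n\in\mathbb{Z}_{\ge0}$, $\beta(n)$ is represented by $g$ over $\mathbb{Z}_p$ if and only if $\beta(n)$ is represented by the $\mathbb{Z}$-lattice $\langle a_1,a_2,a_3\rangle$ over $\mathbb{Z}_p$.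
   Context: Define $\delta=4$ if $m$ is odd, $\delta=2$ if $m\equiv2\pmod4$, $\delta=1$ if $m\equiv0\pmod4$, and $c=\delta\frac{m-2}{2}$. An integer $n$ is represented by $g$ over $R\in\{\mathbb{Z},\mathbb{Z}_p,\mathbb{R}\}$ if $g(\mathbf{x})=n$ for some $\mathbf{x}\in R^3$; locally represented means represented over every $\mathbb{Z}_p$ and over $\mathbb{R}$. $\min(g)=\min\{g(\mathbf{x}):\mathbf{x}\in\mathbb{Z}^3\}$; $g$ is tight regular if it represents over $\mathbb{Z}$ every locally represented integer $\ge\min(g)$. $\langle a_1,a_2,a_3\rangle$ is the lattice with form $a_1x_1^2+a_2x_2^2+a_3x_3^2$. For an odd prime $p$ with nonsquare unit $\Delta_p$, a diagonal ternary lattice $K$ is $p$-stable if $\langle1,-1\rangle$ is represented by $K\otimes\mathbb{Z}_p$ or $K\otimes\mathbb{Z}_p\cong\langle1,-\Delta_p\rangle\perp\langle p\epsilon\rangle$ with $\epsilon\in\mathbb{Z}_p^\times$; $K$ is $2$-stable if $K\otimes\mathbb{Z}_2$ is unimodular or $\langle1,3\rangle$ or $\langle1,7\rangle$ is represented by $K\otimes\mathbb{Z}_2$. *)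

(* Defs.v *)
From Stdlib Require Reals.
From HB Require Import structures.
From mathcomp Require Import all_boot all_order all_algebra.
From mathcomp Require Import Rstruct.
Set Implicit Arguments. Unset Strict Implicit. Unset Printing Implicit Defensive.
Import Order.TTheory GRing.Theory Num.Theory.
Local Open Scope ring_scope.

(* delta and c = delta (m-2)/2 (an exact division) *)
Definition delta (m : nat) : int :=
  if odd m then 4 else if (m %% 4 == 2)%N then 2 else 1.
Definition cc (m : nat) : int := ((delta m * (m%:Z - 2)) %/ 2)%Z.

Definition tpoly := forall R : comNzRingType, R -> R -> R -> R.

Definition gpol (c a1 a2 a3 al1 al2 al3 : int) : tpoly :=
  fun R x1 x2 x3 =>
    a1%:~R * (c%:~R * x1 + al1%:~R) ^+ 2 + a2%:~R * (c%:~R * x2 + al2%:~R) ^+ 2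
    + a3%:~R * (c%:~R * x3 + al3%:~R) ^+ 2.

(* the diagonal form of the lattice <a1,a2,a3> *)
Definition dform (a1 a2 a3 : int) : tpoly :=
  fun R x1 x2 x3 => a1%:~R * x1 ^+ 2 + a2%:~R * x2 ^+ 2 + a3%:~R * x3 ^+ 2.

(* ---- p-adic integers Z_p, as the inverse limit of Z/p^k Z ----
   An element of Z_p is a coherent sequence of integer representatives
   u k (taken modulo p^k); two such are equal iff they agree mod p^k for all k.
   A polynomial identity with integer coefficients holds in Z_p iff it holds
   levelwise on representatives modulo every p^k. *)
Record Zp (p : nat) := MkZp {
  zp_seq :> nat -> int;
  zp_coh : forall k : nat, (zp_seq k.+1 = zp_seq k %[mod (p ^ k)%:Z])%Z }.

Definition zp_unit (p : nat) (u : nat -> int) : Prop :=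
  exists w : Zp p, forall k : nat, (u k * w k = 1 %[mod (p ^ k)%:Z])%Z.

Definition zp_square (p : nat) (u : Zp p) : Prop :=
  exists y : Zp p, forall k : nat, (y k ^+ 2 = u k %[mod (p ^ k)%:Z])%Z.

Definition rep_Z (P : tpoly) (n : int) : Prop :=
  exists x1 x2 x3 : int, P _ x1 x2 x3 = n.

Definition rep_Zp (p : nat) (P : tpoly) (n : int) : Prop :=
  exists x1 x2 x3 : Zp p, forall k : nat,
    (P _ (x1 k) (x2 k) (x3 k) = n %[mod (p ^ k)%:Z])%Z.

Definition rep_R (P : tpoly) (n : int) : Prop :=
  exists x1 x2 x3 : Rdefinitions.R, P _ x1 x2 x3 = n%:~R.

Definition locally_rep (P : tpoly) (n : int) : Prop :=
  (forall p : nat, prime p -> rep_Zp p P n) /\ rep_R P n.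

Definition is_min (P : tpoly) (v : int) : Prop :=
  (exists x1 x2 x3 : int, P _ x1 x2 x3 = v) /\
  (forall x1 x2 x3 : int, v <= P _ x1 x2 x3).

Definition tight_regular (P : tpoly) : Prop :=
  exists v : int, is_min P v /\
    forall n : int, v <= n -> locally_rep P n -> rep_Z P n.

Definition vec (p : nat) := 'I_3 -> Zp p.

Definition bil (a1 a2 a3 : int) (p : nat) (v w : vec p) (k : nat) : int :=
  a1 * v ord0 k * w ord0 k + a2 * v (inord 1) k * w (inord 1) k
  + a3 * v (inord 2) k * w (inord 2) k.

(* the binary lattice <b1,b2> is represented by K (x) Z_p *)
Definition rep_binary (p : nat) (a1 a2 a3 b1 b2 : int) : Prop :=
  exists v w : vec p, forall k : nat,
    [/\ (bil a1 a2 a3 v v k = b1 %[mod (p ^ k)%:Z])%Z,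
        (bil a1 a2 a3 w w k = b2 %[mod (p ^ k)%:Z])%Z &
        (bil a1 a2 a3 v w k = 0 %[mod (p ^ k)%:Z])%Z].

Definition iso_special (p : nat) (a1 a2 a3 : int) (Delta eps : Zp p) : Prop :=
  exists e : 'I_3 -> vec p,
    zp_unit p (fun k => \det (\matrix_(i < 3, j < 3) e i j k)) /\
    forall (i j : 'I_3) (k : nat),
      (bil a1 a2 a3 (e i) (e j) k =
        (if i != j then 0
         else if i == ord0 then 1
         else if i == inord 1 then - Delta k
         else p%:Z * eps k) %[mod (p ^ k)%:Z])%Z.

(* unimodularity of K (x) Z_p: the Gram determinant a1 a2 a3 is a unit *)
Definition unimodular (p : nat) (a1 a2 a3 : int) : Prop :=
  zp_unit p (fun _ => a1 * a2 * a3).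

Definition p_stable (p : nat) (a1 a2 a3 : int) : Prop :=
  if p == 2%N then
    [\/ unimodular 2 a1 a2 a3, rep_binary 2 a1 a2 a3 1 3 | rep_binary 2 a1 a2 a3 1 7]
  else
    rep_binary p a1 a2 a3 1 (-1) \/
    exists Delta eps : Zp p,
      [/\ zp_unit p Delta, ~ zp_square Delta, zp_unit p eps &
          iso_special a1 a2 a3 Delta eps].

(* Main.v *)
Require Import Defs.
From HB Require Import structures.
From mathcomp Require Import all_boot all_order all_algebra.
From mathcomp Require Import zify ring.
Import Order.TTheory GRing.Theory Num.Theory.
Local Open Scope ring_scope.

Lemma PoszX' (p k : nat) : (p ^ k)%:Z = p%:Z ^+ k.
Proof. elim: k => [|k IH]; first by []. by rewrite expnS exprS PoszM IH. Qed.

Lemma dvd_cong (d a b : int) : (d %| a - b)%Z -> (a = b %[mod d])%Z.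
Proof. by move=> h; apply/eqP; rewrite eqz_mod_dvd. Qed.

Lemma cong_dvd (d a b : int) : (a = b %[mod d])%Z -> (d %| a - b)%Z.
Proof. by move=> h; rewrite -eqz_mod_dvd h. Qed.

Lemma primez_dvdM (p : nat) (x y : int) : prime p ->
  (p%:Z %| x * y)%Z = (p%:Z %| x)%Z || (p%:Z %| y)%Z.
Proof. by move=> pp; rewrite !dvdzE abszM Euclid_dvdM. Qed.

Fixpoint hs (p : nat) (A B N u : int) (k : nat) : int :=
  match k with
  | 0%N => 0
  | k'.+1 => let t := hs p A B N u k' in
      t - (p%:Z ^+ k') * (((A * t ^+ 2 + B * t - N) %/ (p%:Z ^+ k'))%Z * u)
  end.

Lemma hs_ok (p : nat) (A B N u : int) : (p%:Z %| A)%Z -> (p%:Z %| 1 - u * B)%Z ->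
  forall k, (p%:Z ^+ k %| A * (hs p A B N u k) ^+ 2 + B * (hs p A B N u k) - N)%Z.
Proof.
move=> hA hu; elim=> [|k IH]; first by rewrite expr0 dvd1z.
rewrite /=; set t := hs p A B N u k; set P := p%:Z ^+ k.
set r := ((A * t ^+ 2 + B * t - N) %/ P)%Z.
have e : A * t ^+ 2 + B * t - N = r * P by rewrite divzK.
have -> : A * (t - P * (r * u)) ^+ 2 + B * (t - P * (r * u)) - N
   = (A * t ^+ 2 + B * t - N) + P * (- (r * u * (2 * A * t + B)) + A * P * r ^+ 2 * u ^+ 2)
  by ring.
rewrite e.
have -> : r * P + P * (- (r * u * (2 * A * t + B)) + A * P * r ^+ 2 * u ^+ 2)
  = P * (r * (1 - u * B) + A * (- (2 * t * r * u) + P * r ^+ 2 * u ^+ 2)) by ring.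
rewrite (exprSr p%:Z k) -/P; apply: dvdz_mul; first exact: dvdzz.
by apply: rpredD; [exact: dvdz_mull | exact: dvdz_mulr].
Qed.

Lemma hs_coh (p : nat) (A B N u : int) (k : nat) :
  (hs p A B N u k.+1 = hs p A B N u k %[mod (p ^ k)%:Z])%Z.
Proof.
apply: dvd_cong; rewrite PoszX' /=.
set t := hs p A B N u k.
have -> : forall X, t - p%:Z ^+ k * X - t = p%:Z ^+ k * (- X) by move=> X; ring.
exact: dvdz_mulr.
Qed.

Lemma hensel (p : nat) (A B N : int) : prime p -> (p%:Z %| A)%Z -> ~~ (p%:Z %| B)%Z ->
  exists t : Defs.Zp p, forall k, (p%:Z ^+ k %| A * t k ^+ 2 + B * t k - N)%Z.
Proof.
move=> pp hA hB.
have cop : coprimez p%:Z B.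
  by rewrite coprimezE /= prime_coprime // -dvdzE.
have [u1 [v e]] := Bezoutz p%:Z B.
have hu : (p%:Z %| 1 - v * B)%Z.
  move: cop; rewrite /coprimez => /eqP g1; rewrite -g1 -e.
  have -> : u1 * p%:Z + v * B - v * B = u1 * p%:Z by ring.
  exact: dvdz_mull.
exists (@MkZp p (hs p A B N v) (hs_coh p A B N v)) => k /=.
exact: hs_ok.
Qed.

Lemma aff_coh p (x : Defs.Zp p) (c a : int) k :
  (c * x k.+1 + a = c * x k + a %[mod (p ^ k)%:Z])%Z.
Proof.
apply: dvd_cong.
have -> : c * x k.+1 + a - (c * x k + a) = c * (x k.+1 - x k) by ring.
exact/dvdz_mull/cong_dvd/zp_coh.
Qed.
Definition zaff p (x : Defs.Zp p) (c a : int) : Defs.Zp p := @MkZp p _ (aff_coh p x c a).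

Definition zconst p (a : int) : Defs.Zp p := @MkZp p (fun _ => a) (fun k => erefl).

Lemma mul_coh p (w y : Defs.Zp p) (a : int) k :
  (w k.+1 * (y k.+1 - a) = w k * (y k - a) %[mod (p ^ k)%:Z])%Z.
Proof.
apply: dvd_cong.
have -> : w k.+1 * (y k.+1 - a) - w k * (y k - a)
   = w k.+1 * (y k.+1 - y k) + (y k - a) * (w k.+1 - w k) by ring.
apply: rpredD; apply/dvdz_mull/cong_dvd/zp_coh.
Qed.
Definition zmuls p (w y : Defs.Zp p) (a : int) : Defs.Zp p := @MkZp p _ (mul_coh p w y a).

Lemma cc_odd m : odd m -> delta m = 4 /\ cc m = 2 * (m%:Z - 2).
Proof.
move=> om; rewrite /cc /delta om; split => //.
have -> : 4 * (m%:Z - 2) = (2 * (m%:Z - 2)) * 2 by ring.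
by rewrite mulzK.
Qed.

Lemma cc_2 m : ~~ odd m -> (m %% 4 == 2)%N -> delta m = 2 /\ cc m = 4 * (m %/ 4)%:Z.
Proof.
move=> om h; rewrite /cc /delta (negbTE om) h; split => //.
have em : m%:Z = 4 * (m %/ 4)%:Z + 2.
  have e := divn_eq m 4; move/eqP: h => h; rewrite h in e. by rewrite {1}e PoszD PoszM mulrC.
rewrite em.
have -> : 2 * (4 * (m %/ 4)%:Z + 2 - 2) = (4 * (m %/ 4)%:Z) * 2 by ring.
by rewrite mulzK.
Qed.

Lemma cc_0 m : ~~ odd m -> (m %% 4 != 2)%N -> (4 <= m)%N ->
  delta m = 1 /\ ~~ (2%:Z %| cc m)%Z.
Proof.
move=> om h m4; rewrite /cc /delta (negbTE om) (negbTE h); split => //.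
have h0 : (m %% 4 = 0)%N.
  have := ltn_pmod m (isT : (0 < 4)%N).
  have : (odd (m %% 4)) = odd m by by rewrite [in RHS](divn_eq m 4) oddD oddM /= andbF.
  rewrite (negbTE om); move: h; case: (m %% 4)%N => [|[|[|[|]]]] //.
have em : m%:Z - 2 = (2 * (m %/ 4)%:Z - 1) * 2.
  have e := divn_eq m 4; rewrite h0 addn0 in e. rewrite {1}e PoszM. ring.
rewrite mul1r em mulzK //.
have -> : 2 * (m %/ 4)%:Z - 1 = 1 + 2 * ((m %/ 4)%:Z - 1) by ring.
rewrite dvdzE. 
have hq : (1 <= m %/ 4)%N by rewrite divn_gt0.
have -> : (m %/ 4)%:Z - 1 = (m %/ 4 - 1)%N%:Z by rewrite subzn.
rewrite -PoszM -PoszD /=. by rewrite dvdn2 oddD oddM.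
Qed.

Lemma eq_dvd (d x y : int) : (d %| y)%Z -> x = y -> (d %| x)%Z.
Proof. by move=> h ->. Qed.

Lemma dvd_comb (d X D S F : int) : (d %| X)%Z -> (d %| D)%Z -> F = X + D * S -> (d %| F)%Z.
Proof. by move=> hX hD ->; apply: rpredD => //; apply: dvdz_mulr. Qed.

Lemma not_dvd2 p : prime p -> p != 2%N -> ~~ (p%:Z %| 2)%Z.
Proof. by move=> pp p2; rewrite dvdzE /= dvdn_prime2. Qed.

Lemma single p m a al n : (4 <= m)%N -> prime p -> (p%:Z %| cc m)%Z ->
  ~~ (p%:Z %| a)%Z -> ~~ (p%:Z %| al)%Z ->
  exists x : Defs.Zp p, forall k,
    (p%:Z ^+ k %| a * (cc m * x k + al) ^+ 2 - a * al ^+ 2 - delta m * cc m * n%:Z)%Z.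
Proof.
move=> m4 pp pc pa pal.
case: (eqVneq p 2) => [p2|p2].
- subst p. case om: (odd m).
  + have [hd hc] := cc_odd m om.
    have [t Ht] := hensel 2 (a * cc m) (a * al) n%:Z pp
      (dvdz_mull _ pc)
      ltac:(by rewrite primez_dvdM // negb_or pa pal).
    exists (zaff 2 t 2 0) => k /=.
    apply: (@eq_dvd _ _ _ (dvdz_mull (4 * cc m) (Ht k))); rewrite hd; ring.
  + case h2: (m %% 4 == 2)%N.
    * have [hd hc] := cc_2 m (negbT om) h2.
      have [t Ht] := hensel 2 (a * 2 * (m %/ 4)%:Z) (a * al) n%:Z pp
        (dvdz_mulr _ (dvdz_mull a (dvdzz (2:int))))
        ltac:(by rewrite primez_dvdM // negb_or pa pal).
      exists t => k.
      apply: (@eq_dvd _ _ _ (dvdz_mull (8 * (m %/ 4)%:Z) (Ht k))); rewrite hd hc; ring.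
    * have [_ hn] := cc_0 m (negbT om) (negbT h2) m4.
      by rewrite pc in hn.
- have [t Ht] := hensel p (a * cc m) (2 * a * al) (delta m * n%:Z) pp
      (dvdz_mull _ pc)
      ltac:(by rewrite !primez_dvdM // !negb_or pa pal not_dvd2).
  exists t => k.
  apply: (@eq_dvd _ _ _ (dvdz_mull (cc m) (Ht k))); ring.
Qed.

Lemma sq_bound (a b x : int) : 0 < a -> 2 * a < b -> a ^+ 2 <= (b * x + a) ^+ 2.
Proof.
move=> ha hab. rewrite !expr2.
have [h|[h|h]] : x = 0 \/ 1 <= x \/ x <= -1 by lia.
- by rewrite h; lia.
- have: b <= b * x by nia. nia.
- have: b * x <= - b by nia. nia.
Qed.

Lemma not_dvd1 p : prime p -> 1%R \notin dvdz p%:Z.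
Proof. by move=> pp; rewrite dvdz1 /=; case: p pp => [|[|]]. Qed.

Theorem lemma3p4 (m : nat) (a1 a2 a3 al1 al2 al3 : int) :
  (4 <= m)%N ->
  0 < a1 -> 0 < a2 -> 0 < a3 -> a1 <= a2 -> a2 <= a3 ->
  gcdz (gcdz a1 a2) a3 = 1 ->
  (forall p : nat, prime p -> ~~ (p%:Z %| cc m)%Z -> p_stable p a1 a2 a3) ->
  0 < al1 -> 2 * al1 < cc m ->
  0 < al2 -> 2 * al2 < cc m ->
  0 < al3 -> 2 * al3 < cc m ->
  gcdz (cc m) (al1 * al2 * al3) = 1 ->
  tight_regular (gpol (cc m) a1 a2 a3 al1 al2 al3) ->
  let g := gpol (cc m) a1 a2 a3 al1 al2 al3 in
  let A := a1 * al1 ^+ 2 + a2 * al2 ^+ 2 + a3 * al3 ^+ 2 in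
  let beta (n : nat) := delta m * cc m * n%:Z + A in
  [/\ is_min g A,
      (forall p : nat, prime p -> (p%:Z %| cc m)%Z ->
         forall n : nat, rep_Zp p g (beta n)) &
      (forall p : nat, prime p -> ~~ (p%:Z %| cc m)%Z ->
         forall n : nat, rep_Zp p g (beta n) <-> rep_Zp p (dform a1 a2 a3) (beta n))].
Proof.
move=> hm ha1 ha2 ha3 _ _ hg _ h1 h1' h2 h2' h3 h3' hgc _ g A beta.
split.
- split.
  + by exists 0, 0, 0; rewrite /g /A /gpol !intz !mulr0 !add0r.
  + move=> x1 x2 x3; rewrite /g /A /gpol !intz.
    have s1 := sq_bound al1 (cc m) x1 h1 h1'.
    have s2 := sq_bound al2 (cc m) x2 h2 h2'.
    have s3 := sq_bound al3 (cc m) x3 h3 h3'.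
    nia.
- move=> p pp pc n.
  have nal : forall al : int, (p%:Z %| al)%Z -> (p%:Z %| al1 * al2 * al3)%Z -> False.
    move=> _ _ h; move: (not_dvd1 p pp); rewrite -hgc dvdz_gcd pc h //.
  have n1 : ~~ (p%:Z %| al1)%Z.
    by apply/negP => h; apply: (nal al1 h); rewrite dvdz_mulr // dvdz_mulr.
  have n2 : ~~ (p%:Z %| al2)%Z.
    by apply/negP => h; apply: (nal al2 h); rewrite dvdz_mulr // dvdz_mull.
  have n3 : ~~ (p%:Z %| al3)%Z.
    by apply/negP => h; apply: (nal al3 h); rewrite dvdz_mull.
  have [na1|da1] := boolP (p%:Z %| a1)%Z; last first.
    have [x Hx] := single p m a1 al1 n hm pp pc da1 n1.
    exists x, (zconst p 0), (zconst p 0) => k; apply: dvd_cong; rewrite PoszX'.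
    apply: (eq_dvd _ _ _ (Hx k)); rewrite /g /beta /A /gpol !intz /=; ring.
  have [na2|da2] := boolP (p%:Z %| a2)%Z; last first.
    have [x Hx] := single p m a2 al2 n hm pp pc da2 n2.
    exists (zconst p 0), x, (zconst p 0) => k; apply: dvd_cong; rewrite PoszX'.
    apply: (eq_dvd _ _ _ (Hx k)); rewrite /g /beta /A /gpol !intz /=; ring.
  have [na3|da3] := boolP (p%:Z %| a3)%Z; last first.
    have [x Hx] := single p m a3 al3 n hm pp pc da3 n3.
    exists (zconst p 0), (zconst p 0), x => k; apply: dvd_cong; rewrite PoszX'.
    apply: (eq_dvd _ _ _ (Hx k)); rewrite /g /beta /A /gpol !intz /=; ring.
  by move: (not_dvd1 p pp); rewrite -hg !dvdz_gcd na1 na2 na3.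
- move=> p pp pnc n; split.
  + case=> [x1 [x2 [x3 H]]].
    exists (zaff p x1 (cc m) al1), (zaff p x2 (cc m) al2), (zaff p x3 (cc m) al3) => k.
    by move: (H k); rewrite /g /gpol /dform !intz /=.
  + case=> [y1 [y2 [y3 H]]].
    have [w Hw] := hensel p 0 (cc m) 1 pp (dvdz0 _) pnc.
    exists (zmuls p w y1 al1), (zmuls p w y2 al2), (zmuls p w y3 al3) => k.
    apply: dvd_cong; move: (cong_dvd _ _ _ (H k)); rewrite PoszX' => Hk.
    apply: (dvd_comb _ _ _ (a1 * (y1 k - al1) * (cc m * w k * (y1 k - al1) + al1 + y1 k)
             + a2 * (y2 k - al2) * (cc m * w k * (y2 k - al2) + al2 + y2 k)
             + a3 * (y3 k - al3) * (cc m * w k * (y3 k - al3) + al3 + y3 k)) _ Hk (Hw k)).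
    rewrite /g /gpol /dform !intz /=; ring.
Qed.
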